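(* Let $m$ be a positive even integer, and for $z\in\{0,1\}$ let $\mathcal G_z$ be the uniform distribution over $\textsc{GapOr}_m^{-1}(z)$. For every conjunction $C\colon\{0,1\}^m\to\{0,1\}$: (i) $C(\mathcal G_0)\in\{0,1\}$; (ii) if $C(\mathcal G_0)=1$ and $C$ has width $w\le m/4$, then $C(\mathcal G_1)\ge 3^{-w}$.
   Context: $\textsc{GapOr}_m\colon\{0,1\}^m\to\{0,1\}$ is the partial function with value $0$ on the all-zeros input and value $1$ on inputs of Hamming weight $m/2$ (undefined otherwise). A conjunction is an AND of literals; its width is its number of literals. For a conjunction $C$ and distribution $\mathcal D$, $C(\mathcal D)=\Pr_{x\sim\mathcal D}[C(x)=1]$. *)

(* Defs.v *)
From mathcomp Require Import all_boot all_order all_algebra.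
Set Implicit Arguments. Unset Strict Implicit. Unset Printing Implicit Defensive.
Import Order.TTheory GRing.Theory Num.Theory.

(* Inputs in {0,1}^m are finite functions 'I_m -> bool (true = 1). *)
Notation input m := {ffun 'I_m -> bool}.

Definition hweight m (x : input m) : nat := #|[set i | x i]|.

Definition gapor_inv m (z : bool) : {set input m} :=
  if z then [set x | hweight x == m %/ 2] else [set x | hweight x == 0].

(* A literal (i, b) is satisfied by x iff x i = b; i.e. (i,true) = x_i, (i,false) = ~x_i. *)
Definition literal m := ('I_m * bool)%type.

Definition conj_eval m (C : seq (literal m)) (x : input m) : bool :=
  all (fun l => x l.1 == l.2) C.

Definition width m (C : seq (literal m)) : nat := size C.

Definition prob_unif m (A : {set input m}) (C : seq (literal m)) : rat :=
  (#|[set x in A | conj_eval C x]|%:R / #|A|%:R)%R.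

Definition CG m (C : seq (literal m)) (z : bool) : rat := prob_unif (gapor_inv m z) C.

(* Main.v *)
Require Import Defs.
From mathcomp Require Import all_boot all_order all_algebra.
From mathcomp Require Import zify.
Set Implicit Arguments. Unset Strict Implicit.
Import Order.TTheory GRing.Theory Num.Theory.

Definition supp m (x : input m) : {set 'I_m} := [set i | x i].

Lemma supp_inj m : injective (@supp m).
Proof. move=> x y e; apply/ffunP=> i; have := congr1 (fun A : {set _} => i \in A) e; by rewrite /supp !inE. Qed.

Lemma card_sub m (B : {set 'I_m}) h :
  #|[set x : input m | (supp x \subset B) && (hweight x == h)]| = 'C(#|B|, h).
Proof.
rewrite -cards_draws -(card_imset _ (@supp_inj m)); apply: eq_card => A.
rewrite !inE; apply/imsetP/idP.
  by case=> x; rewrite inE => hx ->.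
move=> hA; have E : supp [ffun i => i \in A] = A by apply/setP=> i; rewrite /supp !inE ffunE.
exists [ffun i => i \in A]; last by rewrite E.
rewrite inE; have -> : hweight [ffun i => i \in A] = #|supp [ffun i => i \in A]| by [].
by rewrite E.
Qed.

Lemma binbound m k : ~~ odd m -> (k <= m %/ 4)%N -> ('C(m, m %/ 2) <= 3 ^ k * 'C(m - k, m %/ 2))%N.
Proof.
move=> ev; elim: k => [|k IH] hk; first by rewrite subn0 mul1n.
have {IH} IH := IH (ltnW hk).
apply: (leq_trans IH); rewrite expnS (mulnC 3) -mulnA leq_pmul2l ?expn_gt0 //.
have hpos : (0 < m - k)%N by have := leq_div m 4; lia.
rewrite -(leq_pmul2l hpos) mulnCA.
have e := mul_bin_down (m - k) (m %/ 2).
rewrite (_ : (m - k).-1 = m - k.+1) in e; last by lia.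
rewrite e mulnA leq_mul2r; apply/orP; right.
have := divn_eq m 4; have := divn_eq m 2; have := modn2 m; rewrite (negbTE ev).
have := ltn_pmod m (isT : 0 < 4)%N. lia.
Qed.

Local Open Scope ring_scope.

Definition x0 m : input m := [ffun _ => false].

Lemma G0E m : gapor_inv m false = [set x0 m].
Proof.
apply/setP=> x; rewrite /gapor_inv !inE /hweight cards_eq0; apply/eqP/eqP => [h|->].
  apply/ffunP=> i; rewrite ffunE; have : i \notin [set i | x i] by rewrite h inE.
  by rewrite inE; case: (x i).
by apply/setP=> i; rewrite !inE ffunE.
Qed.

Lemma CG0 m (C : seq (literal m)) : CG C false = if conj_eval C (x0 m) then 1 else 0.
Proof.
rewrite /CG /prob_unif G0E cards1 divr1.
case hb: (conj_eval C (x0 m)).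
  have -> : [set x in [set x0 m] | conj_eval C x] = [set x0 m].
    by apply/setP=> x; rewrite !inE; case: eqP => [->|]; rewrite ?hb.
  by rewrite cards1.
have -> : [set x in [set x0 m] | conj_eval C x] = set0.
  by apply/setP=> x; rewrite !inE; case: eqP => [->|]; rewrite ?hb.
by rewrite cards0.
Qed.

Theorem fact3p3 (m : nat) (hm : (0 < m)%N) (heven : ~~ odd m)
    (C : seq (literal m)) :
  (CG C false = 0 \/ CG C false = 1) /\
  (CG C false = 1 -> (width C <= m %/ 4)%N ->
     (3 ^+ width C)^-1 <= CG C true).
Proof.
rewrite CG0; split; first by case: (conj_eval C (x0 m)); [right|left].
case hc: (conj_eval C (x0 m)); last by move/eqP; rewrite eq_sym oner_eq0.
move=> _.
move=> hw.
have hall : forall l, l \in C -> l.2 = false.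
  move=> l lC; move/allP: hc => /(_ l lC); rewrite ffunE; by case: (l.2).
set S := [set l.1 | l in C].
have E1 : [set x in gapor_inv m true | conj_eval C x] =
   [set x : input m | (supp x \subset ~: S) && (hweight x == (m %/ 2)%N)].
  apply/setP=> x; rewrite !inE andbC; congr (_ && _).
  apply/allP/subsetP.
    move=> h i; rewrite !inE => xi; apply/imsetP => [[l lC ei]].
    by have := h l lC; rewrite hall // -ei xi.
  move=> h l lC; rewrite hall //; case hx: (x l.1) => //.
  have := h l.1; rewrite !inE hx => /(_ isT); by rewrite imset_f.
have E0 : gapor_inv m true = [set x : input m | (supp x \subset [set: 'I_m]) && (hweight x == (m %/ 2)%N)].
  by apply/setP=> x; rewrite !inE subsetT.
rewrite /CG /prob_unif E1 {1}E0 !card_sub cardsT card_ord.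
have hS : #|~: S| = (m - #|S|)%N by move: (cardsC S); rewrite card_ord; lia.
rewrite hS.
have kw : (#|S| <= width C)%N by apply: leq_trans (leq_imset_card _ _) (card_size _).
have kb := binbound (k := #|S|) heven (leq_trans kw hw).
have c0 : (0 < 'C(m, m %/ 2))%N by rewrite bin_gt0 leq_div.
apply: (@le_trans _ _ (3 ^+ #|S|)^-1).
  rewrite lef_pV2 ?posrE ?exprn_gt0 //; by rewrite ler_eXn2l.
rewrite ler_pdivlMr ?ltr0n // ler_pdivrMl ?exprn_gt0 //.
by rewrite -natrX -natrM ler_nat.
Qed.
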